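(* Let $f\in H^p(\mathbb B)$ and $n\in\mathbb N$. If $1\le p<\infty$ then $$|f^{(n)}(0)|\le\sqrt2\,n!\,e^{1/p}\Big(1+\frac{np}{2}\Big)^{1/p}\|f\|_p,$$ and if $p=\infty$ then $|f^{(n)}(0)|\le n!\,\|f\|_\infty$.
   Context: $\mathbb H$ quaternions, $\mathbb S=\{q:q^2=-1\}$, $\mathbb B$ open unit ball. Slice regular functions on $\mathbb B$ are exactly convergent power series $f(q)=\sum_nq^na_n$, and $f^{(n)}=\partial^nf/\partial x^n$ denotes the $n$-th slice derivative, so $a_n=f^{(n)}(0)/n!$. Hardy spaces: $\|f\|_p=\sup_{I\in\mathbb S}\lim_{r\to1^-}(\frac1{2\pi}\int_{-\pi}^\pi|f(re^{I\theta})|^pd\theta)^{1/p}$ for $p<\infty$, $\|f\|_\infty=\sup_{\mathbb B}|f|$, $H^p(\mathbb B)=\{f$ regular on $\mathbb B:\|f\|_p<\infty\}$. *)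

(* Defs.v *)
From Stdlib Require Import Reals Lra Arith Factorial Classical ClassicalEpsilon.
Open Scope R_scope.

Record quat := Q { qr : R; qi : R; qj : R; qk : R }.

Definition qzero : quat := Q 0 0 0 0.
Definition qone : quat := Q 1 0 0 0.
Definition qreal (x : R) : quat := Q x 0 0 0.

Definition qadd (p q : quat) : quat :=
  Q (qr p + qr q) (qi p + qi q) (qj p + qj q) (qk p + qk q).

Definition qscale (c : R) (q : quat) : quat :=
  Q (c * qr q) (c * qi q) (c * qj q) (c * qk q).

Definition qmul (p q : quat) : quat :=
  Q (qr p * qr q - qi p * qi q - qj p * qj q - qk p * qk q)
    (qr p * qi q + qi p * qr q + qj p * qk q - qk p * qj q)
    (qr p * qj q - qi p * qk q + qj p * qr q + qk p * qi q)
    (qr p * qk q + qi p * qj q - qj p * qi q + qk p * qr q).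

Definition qnorm (q : quat) : R :=
  sqrt (qr q ^ 2 + qi q ^ 2 + qj q ^ 2 + qk q ^ 2).

Fixpoint qpow (q : quat) (n : nat) : quat :=
  match n with
  | O => qone
  | S m => qmul (qpow q m) q
  end.

Definition in_S (I : quat) : Prop := qmul I I = qreal (-1).

Fixpoint qpsum (a : nat -> quat) (q : quat) (N : nat) : quat :=
  match N with
  | O => qmul (qpow q 0) (a 0%nat)
  | S M => qadd (qpsum a q M) (qmul (qpow q (S M)) (a (S M)))
  end.

Definition qseries_cv (a : nat -> quat) (q : quat) (s : quat) : Prop :=
  Un_cv (fun N => qr (qpsum a q N)) (qr s) /\
  Un_cv (fun N => qi (qpsum a q N)) (qi s) /\
  Un_cv (fun N => qj (qpsum a q N)) (qj s) /\
  Un_cv (fun N => qk (qpsum a q N)) (qk s).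

(** A slice regular function on the open unit ball B is a power series
    f(q) = sum q^n a_n converging on B; we represent f by its coefficients. *)
Definition slice_regular_ball (a : nat -> quat) : Prop :=
  forall q, qnorm q < 1 -> exists s, qseries_cv a q s.

(** Value f(q) of the power series (meaningful for q in B). *)
Definition feval (a : nat -> quat) (q : quat) : quat :=
  epsilon (inhabits qzero) (fun s => qseries_cv a q s).

(** n-th slice derivative at 0:  f^(n)(0) = n! a_n. *)
Definition slice_deriv0 (a : nat -> quat) (n : nat) : quat :=
  qscale (INR (fact n)) (a n).

Definition expI (I : quat) (th : R) : quat :=
  qadd (qreal (cos th)) (qscale (sin th) I).

Definition rpow (x p : R) : R := if Rlt_dec 0 x then Rpower x p else 0.

(** Riemann integral (value when the function is Riemann integrable). *)
Definition RInt (f : R -> R) (lo hi : R) : R :=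
  epsilon (inhabits 0)
    (fun v => exists pr : Riemann_integrable f lo hi, RiemannInt pr = v).

Definition hardy_mean (p : R) (a : nat -> quat) (I : quat) (r : R) : R :=
  rpow (/ (2 * PI) *
        RInt (fun th => rpow (qnorm (feval a (qscale r (expI I th)))) p)
             (- PI) PI) (1 / p).

Definition hardy_slice_limit (p : R) (a : nat -> quat) (I : quat) (L : R) : Prop :=
  limit1_in (hardy_mean p a I) (fun r => 0 <= r < 1) L 1.

Definition hardy_norm (p : R) (a : nat -> quat) (N : R) : Prop :=
  (forall I, in_S I -> exists L, hardy_slice_limit p a I L) /\
  is_lub (fun y => exists I, in_S I /\ hardy_slice_limit p a I y) N.

Definition hinf_norm (a : nat -> quat) (N : R) : Prop :=
  is_lub (fun y => exists q, qnorm q < 1 /\ y = qnorm (feval a q)) N.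

(* Main.v *)
Require Import Defs.
From Stdlib Require Import Reals Factorial.
From Stdlib Require Import Lra Lia Psatz.
Open Scope R_scope.

Lemma quat_eq (p q : quat) : qr p = qr q -> qi p = qi q -> qj p = qj q -> qk p = qk q -> p = q.
Proof. destruct p, q; simpl; intros; subst; reflexivity. Qed.

Lemma in_S_props I : in_S I -> qr I = 0 /\ qi I ^ 2 + qj I ^ 2 + qk I ^ 2 = 1.
Proof.
  unfold in_S, qmul, qreal; destruct I as [x y z w]; simpl; intros H.
  injection H; intros H4 H3 H2 H1.
  assert (x = 0).
  { destruct (Req_dec x 0) as [|Hx]; auto.
    assert (y = 0) by (apply (Rmult_eq_reg_l (2*x)); [lra| nra]).
    assert (z = 0) by (apply (Rmult_eq_reg_l (2*x)); [lra| nra]).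
    assert (w = 0) by (apply (Rmult_eq_reg_l (2*x)); [lra| nra]).
    subst. nra. }
  subst; split; auto; nra.
Qed.

Definition qdot (p q : quat) : R := qr p * qr q + qi p * qi q + qj p * qj q + qk p * qk q.
Definition qsub (p q : quat) : quat := qadd p (qscale (-1) q).

Lemma qnorm_dot q : qnorm q = sqrt (qdot q q).
Proof. unfold qnorm, qdot; f_equal; ring. Qed.

Lemma qnorm_ge0 q : 0 <= qnorm q.
Proof. apply sqrt_pos. Qed.

Lemma qdot_self_ge0 q : 0 <= qdot q q.
Proof. unfold qdot; nra. Qed.

Lemma qnorm_sq q : qnorm q * qnorm q = qdot q q.
Proof. rewrite qnorm_dot. apply sqrt_sqrt, qdot_self_ge0. Qed.

Lemma cauchy_schwarz p q : qdot p q <= qnorm p * qnorm q.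
Proof.
  destruct (Rle_dec (qdot p q) 0). { pose proof (qnorm_ge0 p); pose proof (qnorm_ge0 q); nra. }
  assert (H : qdot p q * qdot p q <= qdot p p * qdot q q).
  { unfold qdot; destruct p as [a b c d], q as [e f g h]; simpl.
    assert (E : (a*a+b*b+c*c+d*d)*(e*e+f*f+g*g+h*h) - (a*e+b*f+c*g+d*h)*(a*e+b*f+c*g+d*h)
      = (a*f-b*e)^2+(a*g-c*e)^2+(a*h-d*e)^2+(b*g-c*f)^2+(b*h-d*f)^2+(c*h-d*g)^2) by ring.
    assert (0 <= (a*f-b*e)^2+(a*g-c*e)^2+(a*h-d*e)^2+(b*g-c*f)^2+(b*h-d*f)^2+(c*h-d*g)^2).
    { repeat apply Rplus_le_le_0_compat; apply pow2_ge_0. }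
    lra. }
  rewrite <- !qnorm_sq in H.
  pose proof (qnorm_ge0 p); pose proof (qnorm_ge0 q).
  set (m := qnorm p * qnorm q) in *.
  assert (0 <= m) by (unfold m; nra).
  destruct (Rle_dec (qdot p q) m); auto.
  assert (m * m < qdot p q * qdot p q) by nra.
  unfold m in *; nra.
Qed.

Ltac qd := repeat match goal with q : quat |- _ => let a := fresh "x" in let b := fresh "x" in let c := fresh "x" in let d := fresh "x" in destruct q as [a b c d] end; unfold qsub, qmul, qadd, qscale, qdot, qreal, qone, qzero, expI in *; cbn [qr qi qj qk] in *.

Lemma qdot_mul p q : qdot (qmul p q) (qmul p q) = qdot p p * qdot q q.
Proof. qd; ring. Qed.

Lemma qnorm_mul p q : qnorm (qmul p q) = qnorm p * qnorm q.
Proof. rewrite !qnorm_dot, qdot_mul. apply sqrt_mult; apply qdot_self_ge0. Qed.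

Lemma qnorm_scale s p : qnorm (qscale s p) = Rabs s * qnorm p.
Proof.
  rewrite !qnorm_dot. replace (qdot (qscale s p) (qscale s p)) with (Rsqr s * qdot p p) by (unfold Rsqr; qd; ring).
  rewrite sqrt_mult; [| apply Rle_0_sqr | apply qdot_self_ge0]. rewrite sqrt_Rsqr_abs; auto.
Qed.

Lemma qdot_add_l p q v : qdot (qadd p q) v = qdot p v + qdot q v.
Proof. qd; ring. Qed.
Lemma qdot_scale_l s p v : qdot (qscale s p) v = s * qdot p v.
Proof. qd; ring. Qed.

Lemma qnorm_triangle p q : qnorm (qadd p q) <= qnorm p + qnorm q.
Proof.
  pose proof (cauchy_schwarz p q). pose proof (qnorm_ge0 p); pose proof (qnorm_ge0 q).
  rewrite (qnorm_dot (qadd p q)).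
  replace (qdot (qadd p q) (qadd p q)) with (qdot p p + 2 * qdot p q + qdot q q) by (qd; ring).
  rewrite <- !qnorm_sq.
  rewrite <- (sqrt_Rsqr (qnorm p + qnorm q)) by lra.
  apply sqrt_le_1_alt. unfold Rsqr; nra.
Qed.

Lemma qnorm_sub_triangle p q r : qnorm (qsub p r) <= qnorm (qsub p q) + qnorm (qsub q r).
Proof.
  replace (qsub p r) with (qadd (qsub p q) (qsub q r)) by (apply quat_eq; qd; ring).
  apply qnorm_triangle.
Qed.

Lemma qnorm_sub_sym p q : qnorm (qsub p q) = qnorm (qsub q p).
Proof.
  replace (qsub q p) with (qscale (-1) (qsub p q)) by (apply quat_eq; qd; ring).
  rewrite qnorm_scale. replace (Rabs (-1)) with 1 by (rewrite Rabs_left; lra). ring.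
Qed.

Lemma qnorm_rev_triangle p q : qnorm p - qnorm q <= qnorm (qsub p q).
Proof.
  replace p with (qadd (qsub p q) q) at 1 by (apply quat_eq; qd; ring).
  pose proof (qnorm_triangle (qsub p q) q). lra.
Qed.

Lemma qnorm_le_abs q : qnorm q <= Rabs (qr q) + Rabs (qi q) + Rabs (qj q) + Rabs (qk q).
Proof.
  unfold qnorm.
  assert (0 <= Rabs (qr q) + Rabs (qi q) + Rabs (qj q) + Rabs (qk q)).
  { pose proof (Rabs_pos (qr q)); pose proof (Rabs_pos (qi q)); pose proof (Rabs_pos (qj q)); pose proof (Rabs_pos (qk q)); lra. }
  rewrite <- (sqrt_Rsqr (Rabs (qr q) + Rabs (qi q) + Rabs (qj q) + Rabs (qk q))) by auto.
  apply sqrt_le_1_alt.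
  pose proof (Rabs_pos (qr q)); pose proof (Rabs_pos (qi q)); pose proof (Rabs_pos (qj q)); pose proof (Rabs_pos (qk q)).
  rewrite <- (pow2_abs (qr q)), <- (pow2_abs (qi q)), <- (pow2_abs (qj q)), <- (pow2_abs (qk q)).
  unfold Rsqr; nra.
Qed.

Lemma comp_le_norm_r q : Rabs (qr q) <= qnorm q.
Proof. unfold qnorm. rewrite <- sqrt_Rsqr_abs. apply sqrt_le_1_alt. unfold Rsqr; nra. Qed.
Lemma comp_le_norm_i q : Rabs (qi q) <= qnorm q.
Proof. unfold qnorm. rewrite <- sqrt_Rsqr_abs. apply sqrt_le_1_alt. unfold Rsqr; nra. Qed.
Lemma comp_le_norm_j q : Rabs (qj q) <= qnorm q.
Proof. unfold qnorm. rewrite <- sqrt_Rsqr_abs. apply sqrt_le_1_alt. unfold Rsqr; nra. Qed.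
Lemma comp_le_norm_k q : Rabs (qk q) <= qnorm q.
Proof. unfold qnorm. rewrite <- sqrt_Rsqr_abs. apply sqrt_le_1_alt. unfold Rsqr; nra. Qed.

Lemma qmul_assoc p q r : qmul (qmul p q) r = qmul p (qmul q r).
Proof. apply quat_eq; qd; ring. Qed.
Lemma qmul_scale_l s p q : qmul (qscale s p) q = qscale s (qmul p q).
Proof. apply quat_eq; qd; ring. Qed.
Lemma qmul_add_r p q r : qmul p (qadd q r) = qadd (qmul p q) (qmul p r).
Proof. apply quat_eq; qd; ring. Qed.

Section WithI.
Variable I : quat.
Hypothesis HI : in_S I.

Lemma expI_norm t : qnorm (expI I t) = 1.
Proof.
  destruct (in_S_props I HI) as [H0 H1].
  destruct I as [x y z w]; cbn [qr qi qj qk] in *; subst.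
  unfold qnorm, expI, qadd, qreal, qscale; cbn [qr qi qj qk].
  transitivity (sqrt 1); [f_equal | apply sqrt_1].
  pose proof (sin2_cos2 t). unfold Rsqr in *.
  replace ((cos t + sin t * 0) ^ 2 + (0 + sin t * y) ^ 2 + (0 + sin t * z) ^ 2 + (0 + sin t * w) ^ 2)
    with (cos t ^ 2 + sin t ^ 2 * (y ^ 2 + z ^ 2 + w ^ 2)) by ring.
  rewrite H1. nra.
Qed.

Lemma expI_mul s t : qmul (expI I s) (expI I t) = expI I (s + t).
Proof.
  destruct (in_S_props I HI) as [H0 H1].
  destruct I as [x y z w]; cbn [qr qi qj qk] in *; subst.
  apply quat_eq; unfold expI, qmul, qadd, qreal, qscale; cbn [qr qi qj qk]; rewrite ?cos_plus, ?sin_plus.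
  - replace (sin s * sin t) with (sin s * sin t * (y ^ 2 + z ^ 2 + w ^ 2)) by (rewrite H1; ring). ring.
  - ring. - ring. - ring.
Qed.

Lemma qpow_circle r t k : qpow (qscale r (expI I t)) k = qscale (r ^ k) (expI I (INR k * t)).
Proof.
  induction k as [|k IH]; simpl qpow.
  - replace (INR 0 * t) with 0 by (simpl; ring).
    apply quat_eq; unfold expI, qone, qscale, qadd, qreal; cbn [qr qi qj qk]; rewrite ?cos_0, ?sin_0; ring.
  - rewrite IH. transitivity (qscale (r ^ k * r) (qmul (expI I (INR k * t)) (expI I t))).
    { apply quat_eq; unfold qmul, qscale; cbn [qr qi qj qk]; ring. }
    rewrite expI_mul. rewrite S_INR. f_equal.
    + rewrite <- tech_pow_Rmult; ring.
    + f_equal; ring.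
Qed.
End WithI.
Lemma qdot_expI_mul I (HI : in_S I) t a v : qdot (qmul (expI I t) a) v = cos t * qdot a v + sin t * qdot (qmul I a) v.
Proof.
  destruct (in_S_props I HI) as [H0 H1].
  destruct I as [x y z w]; cbn [qr qi qj qk] in *; subst. destruct a as [a1 a2 a3 a4], v as [v1 v2 v3 v4].
  unfold qdot, qmul, expI, qadd, qreal, qscale; cbn [qr qi qj qk]. ring.
Qed.

Lemma bernoulli_real t p : 0 < t -> 1 <= p -> 1 + p * (t - 1) <= Rpower t p.
Proof.
  intros Ht Hp. unfold Rpower.
  replace (p * ln t) with (ln t + (p - 1) * ln t) by ring.
  rewrite exp_plus, exp_ln by auto.
  pose proof (exp_ineq1_le ((p-1) * ln t)).
  pose proof (exp_ineq1_le (- ln t)). rewrite exp_Ropp, exp_ln in H0 by auto.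
  assert (t - t * ln t <= 1).
  { apply (Rmult_le_compat_l t) in H0; [|lra]. rewrite Rinv_r in H0 by lra. lra. }
  nra.
Qed.

Lemma rpow_ge0 x p : 0 <= rpow x p.
Proof. unfold rpow; destruct (Rlt_dec 0 x); [unfold Rpower; left; apply exp_pos | lra]. Qed.

Lemma rpow_pos x p : 0 < x -> rpow x p = Rpower x p.
Proof. intros; unfold rpow; destruct (Rlt_dec 0 x); [auto|lra]. Qed.

Lemma tangent_ineq x d p : 0 <= x -> 0 < d -> 1 <= p ->
  Rpower d p + p * Rpower d (p - 1) * (x - d) <= rpow x p.
Proof.
  intros Hx Hd Hp.
  assert (Hdp : Rpower d p = Rpower d (p - 1) * d).
  { replace p with ((p - 1) + 1) at 1 by ring. rewrite Rpower_plus, Rpower_1; auto. }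
  assert (Hpos : 0 < Rpower d (p - 1)) by (unfold Rpower; apply exp_pos).
  destruct (Rlt_dec 0 x) as [Hx'|Hx'].
  - rewrite rpow_pos by auto.
    replace x with (d * (x / d)) at 2 by (field; lra).
    rewrite <- Rpower_mult_distr by (auto; apply Rdiv_lt_0_compat; auto).
    pose proof (bernoulli_real (x / d) p ltac:(apply Rdiv_lt_0_compat; auto) Hp).
    rewrite Hdp.
    assert (Rpower d (p - 1) * d * (1 + p * (x / d - 1)) <= Rpower d (p - 1) * d * Rpower (x / d) p).
    { apply Rmult_le_compat_l; auto. nra. }
    replace (Rpower d (p - 1) * d * (1 + p * (x / d - 1))) with
      (Rpower d (p - 1) * d + p * Rpower d (p - 1) * (x - d)) in H0 by (field; lra).
    lra.
  - assert (x = 0) by lra. subst. unfold rpow. destruct (Rlt_dec 0 0); [lra|].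
    rewrite Hdp. assert (0 < Rpower d (p - 1) * d) by (apply Rmult_lt_0_compat; auto). nra.
Qed.

Lemma cont_eps f x : continuity_pt f x -> forall eps, 0 < eps ->
  exists del, 0 < del /\ forall y, Rabs (y - x) < del -> Rabs (f y - f x) < eps.
Proof.
  intros H eps He. destruct (H eps He) as [del [Hd Hy]].
  exists del; split; auto. intros y Hyx.
  destruct (Req_dec y x). { subst. rewrite Rminus_diag, Rabs_R0; auto. }
  apply Hy. split. split. unfold no_cond; auto. intro; apply H0; auto. exact Hyx.
Qed.

Lemma eps_cont f x : (forall eps, 0 < eps ->
  exists del, 0 < del /\ forall y, Rabs (y - x) < del -> Rabs (f y - f x) < eps) -> continuity_pt f x.
Proof.
  intros H eps He. destruct (H eps He) as [del [Hd Hy]].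
  exists del; split; auto. intros y [_ Hyx]. apply Hy. exact Hyx.
Qed.

Lemma le_eps a b : (forall eps, 0 < eps -> a <= b + eps) -> a <= b.
Proof.
  intros H. destruct (Rle_dec a b); auto.
  specialize (H ((a - b)/2) ltac:(lra)). lra.
Qed.

Lemma Un_cv_bounded u l : Un_cv u l -> exists M, forall k, Rabs (u k) <= M.
Proof.
  intros H. destruct (H 1 ltac:(lra)) as [N HN].
  assert (Hf : forall m, exists M, forall k, (k <= m)%nat -> Rabs (u k) <= M).
  { induction m as [|m [M HM]].
    - exists (Rabs (u 0%nat)). intros k Hk. assert (k = 0%nat) by lia. subst; lra.
    - exists (Rmax M (Rabs (u (S m)))). intros k Hk.
      destruct (Nat.eq_dec k (S m)). subst; apply Rmax_r.
      eapply Rle_trans; [apply HM; lia | apply Rmax_l]. }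
  destruct (Hf N) as [M HM].
  exists (Rmax M (Rabs l + 1)). intros k.
  destruct (Compare_dec.le_lt_dec k N).
  - eapply Rle_trans; [apply HM; lia | apply Rmax_l].
  - eapply Rle_trans; [| apply Rmax_r]. specialize (HN k ltac:(lia)). unfold R_dist in HN.
    pose proof (Rabs_triang_inv (u k) l). lra.
Qed.

From Stdlib Require Import ClassicalEpsilon.

Definition term (a : nat -> quat) q k := qmul (qpow q k) (a k).

Lemma qpsum_S a q M : qpsum a q (S M) = qadd (qpsum a q M) (term a q (S M)).
Proof. reflexivity. Qed.

Lemma qnorm_one : qnorm qone = 1.
Proof. unfold qnorm, qone; cbn [qr qi qj qk]. replace (1 ^ 2 + 0 ^ 2 + 0 ^ 2 + 0 ^ 2) with 1 by ring. apply sqrt_1. Qed.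

Lemma qpow_norm q k : qnorm (qpow q k) = qnorm q ^ k.
Proof. induction k; simpl qpow. rewrite qnorm_one; simpl; ring. rewrite qnorm_mul, IHk; simpl; ring. Qed.

Lemma term_norm a q k : qnorm (term a q k) = qnorm q ^ k * qnorm (a k).
Proof. unfold term; rewrite qnorm_mul, qpow_norm; ring. Qed.

Lemma qnorm_qreal x : qnorm (qreal x) = Rabs x.
Proof.
  unfold qnorm, qreal; cbn [qr qi qj qk]. rewrite <- sqrt_Rsqr_abs. f_equal. unfold Rsqr; ring.
Qed.

Lemma qsub_add_l X Y : qsub (qadd X Y) X = Y.
Proof. apply quat_eq; qd; ring. Qed.

Lemma qsub_diag X : qsub X X = qzero.
Proof. apply quat_eq; qd; ring. Qed.

Lemma qnorm_zero : qnorm qzero = 0.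
Proof. unfold qnorm, qzero; cbn [qr qi qj qk]. replace (0 ^ 2 + 0 ^ 2 + 0 ^ 2 + 0 ^ 2) with 0 by ring. apply sqrt_0. Qed.

Lemma qnorm_sub_comp X Y : qnorm (qsub X Y) <= Rabs (qr X - qr Y) + Rabs (qi X - qi Y) + Rabs (qj X - qj Y) + Rabs (qk X - qk Y).
Proof.
  eapply Rle_trans; [apply qnorm_le_abs|]. unfold qsub, qadd, qscale; cbn [qr qi qj qk].
  replace (qr X + -1 * qr Y) with (qr X - qr Y) by ring.
  replace (qi X + -1 * qi Y) with (qi X - qi Y) by ring.
  replace (qj X + -1 * qj Y) with (qj X - qj Y) by ring.
  replace (qk X + -1 * qk Y) with (qk X - qk Y) by ring. lra.
Qed.

Lemma coef_bound a (Hreg : slice_regular_ball a) rho : 0 < rho < 1 ->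
  exists B, 0 <= B /\ forall k, rho ^ k * qnorm (a k) <= B.
Proof.
  intros Hr.
  destruct (Hreg (qreal rho)) as [s [H1 [H2 [H3 H4]]]].
  { rewrite qnorm_qreal, Rabs_right; lra. }
  destruct (Un_cv_bounded _ _ H1) as [M1 HM1].
  destruct (Un_cv_bounded _ _ H2) as [M2 HM2].
  destruct (Un_cv_bounded _ _ H3) as [M3 HM3].
  destruct (Un_cv_bounded _ _ H4) as [M4 HM4].
  set (q := qreal rho) in *.
  assert (Hk : forall k, rho ^ k * qnorm (a k) = qnorm (term a q k)).
  { intros k. rewrite term_norm. unfold q. rewrite qnorm_qreal, Rabs_right by lra. ring. }
  exists (Rmax (qnorm (term a q 0)) (2 * (M1 + M2 + M3 + M4))).
  split. { eapply Rle_trans; [apply qnorm_ge0 | apply Rmax_l]. }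
  intros k. rewrite Hk. destruct k as [|m].
  - apply Rmax_l.
  - eapply Rle_trans; [| apply Rmax_r].
    rewrite <- (qsub_add_l (qpsum a q m) (term a q (S m))), <- qpsum_S.
    eapply Rle_trans; [apply qnorm_sub_comp|].
    pose proof (Rabs_triang (qr (qpsum a q (S m))) (- qr (qpsum a q m))).
    pose proof (Rabs_triang (qi (qpsum a q (S m))) (- qi (qpsum a q m))).
    pose proof (Rabs_triang (qj (qpsum a q (S m))) (- qj (qpsum a q m))).
    pose proof (Rabs_triang (qk (qpsum a q (S m))) (- qk (qpsum a q m))).
    rewrite !Rabs_Ropp in *. unfold Rminus.
    pose proof (HM1 (S m)); pose proof (HM1 m); pose proof (HM2 (S m)); pose proof (HM2 m);
    pose proof (HM3 (S m)); pose proof (HM3 m); pose proof (HM4 (S m)); pose proof (HM4 m).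
    lra.
Qed.

Lemma feval_spec a (Hreg : slice_regular_ball a) q : qnorm q < 1 -> qseries_cv a q (feval a q).
Proof.
  intros Hq. unfold feval. apply epsilon_spec. apply Hreg; auto.
Qed.

Lemma limit_norm_le a q s N Y T : qseries_cv a q s ->
  (forall M, (N <= M)%nat -> qnorm (qsub (qpsum a q M) Y) <= T) -> qnorm (qsub s Y) <= T.
Proof.
  intros [H1 [H2 [H3 H4]]] HT. apply le_eps. intros eps He.
  destruct (H1 (eps/4) ltac:(lra)) as [N1 HN1].
  destruct (H2 (eps/4) ltac:(lra)) as [N2 HN2].
  destruct (H3 (eps/4) ltac:(lra)) as [N3 HN3].
  destruct (H4 (eps/4) ltac:(lra)) as [N4 HN4].
  set (M := (N + N1 + N2 + N3 + N4)%nat).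
  eapply Rle_trans; [apply (qnorm_sub_triangle s (qpsum a q M) Y)|].
  assert (qnorm (qsub s (qpsum a q M)) <= eps).
  { eapply Rle_trans; [apply qnorm_sub_comp|].
    specialize (HN1 M ltac:(unfold M; lia)); specialize (HN2 M ltac:(unfold M; lia));
    specialize (HN3 M ltac:(unfold M; lia)); specialize (HN4 M ltac:(unfold M; lia)).
    unfold R_dist in *. rewrite (Rabs_minus_sym (qr s)), (Rabs_minus_sym (qi s)), (Rabs_minus_sym (qj s)), (Rabs_minus_sym (qk s)).
    lra. }
  specialize (HT M ltac:(unfold M; lia)). lra.
Qed.

Lemma term_bound a q r rho B k : qnorm q <= r -> 0 < rho ->
  (forall k, rho ^ k * qnorm (a k) <= B) -> qnorm (term a q k) <= B * (r / rho) ^ k.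
Proof.
  intros Hq Hrho HB. rewrite term_norm.
  assert (qnorm q ^ k <= r ^ k) by (apply pow_incr; split; [apply qnorm_ge0|auto]).
  assert (0 < rho ^ k) by (apply pow_lt; auto).
  unfold Rdiv. rewrite Rpow_mult_distr, pow_inv.
  specialize (HB k). pose proof (qnorm_ge0 (a k)).
  apply Rle_trans with (r ^ k * qnorm (a k)). { apply Rmult_le_compat_r; auto. }
  replace (r ^ k * qnorm (a k)) with ((rho ^ k * qnorm (a k)) * (r ^ k * / rho ^ k)) by (field; lra).
  assert (0 <= r ^ k * / rho ^ k).
  { apply Rmult_le_pos. eapply Rle_trans; [|apply H]. apply pow_le, qnorm_ge0. left; apply Rinv_0_lt_compat; auto. }
  apply Rmult_le_compat_r; auto.
Qed.

Lemma tail_partial a q B lam : 0 <= lam < 1 -> (forall k, qnorm (term a q k) <= B * lam ^ k) ->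
  forall N m, qnorm (qsub (qpsum a q (N + m)) (qpsum a q N)) <= B * (lam ^ (S N) - lam ^ (S (N + m))) / (1 - lam).
Proof.
  intros Hl Ht N m. induction m as [|m IH].
  - rewrite Nat.add_0_r, qsub_diag, qnorm_zero. replace (lam ^ S N - lam ^ S N) with 0 by ring.
    unfold Rdiv; rewrite Rmult_0_r, Rmult_0_l; lra.
  - rewrite Nat.add_succ_r, qpsum_S.
    replace (qsub (qadd (qpsum a q (N + m)) (term a q (S (N + m)))) (qpsum a q N))
      with (qadd (qsub (qpsum a q (N + m)) (qpsum a q N)) (term a q (S (N + m)))) by (apply quat_eq; qd; ring).
    eapply Rle_trans; [apply qnorm_triangle|].
    specialize (Ht (S (N + m))).
    replace (B * (lam ^ S N - lam ^ S (S (N + m))) / (1 - lam)) with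
      (B * (lam ^ S N - lam ^ S (N + m)) / (1 - lam) + B * lam ^ S (N + m)).
    lra. simpl. field. lra.
Qed.

Lemma tail_all a q B lam : 0 <= B -> 0 <= lam < 1 -> (forall k, qnorm (term a q k) <= B * lam ^ k) ->
  forall N M, (N <= M)%nat -> qnorm (qsub (qpsum a q M) (qpsum a q N)) <= B * lam ^ (S N) / (1 - lam).
Proof.
  intros HB Hl Ht N M HNM. replace M with (N + (M - N))%nat by lia.
  eapply Rle_trans; [apply (tail_partial a q B lam Hl Ht)|].
  unfold Rdiv. apply Rmult_le_compat_r. left; apply Rinv_0_lt_compat; lra.
  apply Rmult_le_compat_l; auto. pose proof (pow_le lam (S (N + (M - N))) ltac:(lra)). lra.
Qed.

Lemma feval_tail a (Hreg : slice_regular_ball a) q B lam : qnorm q < 1 -> 0 <= B -> 0 <= lam < 1 ->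
  (forall k, qnorm (term a q k) <= B * lam ^ k) ->
  forall N, qnorm (qsub (feval a q) (qpsum a q N)) <= B * lam ^ (S N) / (1 - lam).
Proof.
  intros Hq HB Hl Ht N. apply (limit_norm_le a q _ N); [apply feval_spec; auto|].
  intros M HM. apply tail_all; auto.
Qed.

Lemma cp_plus f g x : continuity_pt f x -> continuity_pt g x -> continuity_pt (fun t => f t + g t) x.
Proof. apply continuity_pt_plus. Qed.
Lemma cp_minus f g x : continuity_pt f x -> continuity_pt g x -> continuity_pt (fun t => f t - g t) x.
Proof. apply continuity_pt_minus. Qed.
Lemma cp_mult f g x : continuity_pt f x -> continuity_pt g x -> continuity_pt (fun t => f t * g t) x.
Proof. apply continuity_pt_mult. Qed.
Lemma cp_opp f x : continuity_pt f x -> continuity_pt (fun t => - f t) x.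
Proof. apply continuity_pt_opp. Qed.
Lemma cp_const c x : continuity_pt (fun _ => c) x.
Proof. apply continuity_pt_const. intros ? ?; reflexivity. Qed.

Definition qcont (Q : R -> quat) x :=
  continuity_pt (fun t => qr (Q t)) x /\ continuity_pt (fun t => qi (Q t)) x /\
  continuity_pt (fun t => qj (Q t)) x /\ continuity_pt (fun t => qk (Q t)) x.

Ltac cpt := repeat (first [apply cp_minus | apply cp_plus | apply cp_mult | apply cp_opp | apply cp_const | assumption]).

Lemma qcont_const c x : qcont (fun _ => c) x.
Proof. repeat split; apply cp_const. Qed.

Lemma qcont_mul Q1 Q2 x : qcont Q1 x -> qcont Q2 x -> qcont (fun t => qmul (Q1 t) (Q2 t)) x.
Proof.
  intros [? [? [? ?]]] [? [? [? ?]]]. unfold qcont, qmul; cbn [qr qi qj qk].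
  repeat split; cpt.
Qed.

Lemma qcont_add Q1 Q2 x : qcont Q1 x -> qcont Q2 x -> qcont (fun t => qadd (Q1 t) (Q2 t)) x.
Proof.
  intros [? [? [? ?]]] [? [? [? ?]]]. unfold qcont, qadd; cbn [qr qi qj qk].
  repeat split; cpt.
Qed.

Lemma qcont_circle I r x : qcont (fun t => qscale r (expI I t)) x.
Proof.
  assert (continuity_pt cos x) by apply continuity_cos.
  assert (continuity_pt sin x) by apply continuity_sin.
  unfold qcont, qscale, expI, qadd, qreal; cbn [qr qi qj qk].
  repeat split; cpt.
Qed.

Lemma qcont_pow Q x k : qcont Q x -> qcont (fun t => qpow (Q t) k) x.
Proof.
  intros HQ. induction k; simpl qpow. apply qcont_const. apply qcont_mul; auto.
Qed.

Lemma qcont_qpsum a Q x N : qcont Q x -> qcont (fun t => qpsum a (Q t) N) x.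
Proof.
  intros HQ. induction N; cbn [qpsum].
  - apply qcont_mul. apply (qcont_pow Q x 0); auto. apply qcont_const.
  - apply qcont_add; auto. apply qcont_mul. apply qcont_pow; auto. apply qcont_const.
Qed.

Lemma qcont_eps Q x : qcont Q x -> forall eps, 0 < eps ->
  exists del, 0 < del /\ forall y, Rabs (y - x) < del -> qnorm (qsub (Q y) (Q x)) < eps.
Proof.
  intros [H1 [H2 [H3 H4]]] eps He.
  destruct (cont_eps _ _ H1 (eps/4) ltac:(lra)) as [d1 [Hd1 K1]].
  destruct (cont_eps _ _ H2 (eps/4) ltac:(lra)) as [d2 [Hd2 K2]].
  destruct (cont_eps _ _ H3 (eps/4) ltac:(lra)) as [d3 [Hd3 K3]].
  destruct (cont_eps _ _ H4 (eps/4) ltac:(lra)) as [d4 [Hd4 K4]].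
  exists (Rmin (Rmin d1 d2) (Rmin d3 d4)). split.
  { repeat apply Rmin_pos; auto. }
  intros y Hy.
  assert (Rmin (Rmin d1 d2) (Rmin d3 d4) <= d1) by (eapply Rle_trans; apply Rmin_l).
  assert (Rmin (Rmin d1 d2) (Rmin d3 d4) <= d2) by (eapply Rle_trans; [apply Rmin_l|apply Rmin_r]).
  assert (Rmin (Rmin d1 d2) (Rmin d3 d4) <= d3) by (eapply Rle_trans; [apply Rmin_r|apply Rmin_l]).
  assert (Rmin (Rmin d1 d2) (Rmin d3 d4) <= d4) by (eapply Rle_trans; apply Rmin_r).
  eapply Rle_lt_trans; [apply qnorm_sub_comp|].
  specialize (K1 y ltac:(lra)); specialize (K2 y ltac:(lra)); specialize (K3 y ltac:(lra)); specialize (K4 y ltac:(lra)).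
  lra.
Qed.

Lemma rpow_cont p y0 : 1 <= p -> 0 <= y0 -> forall eps, 0 < eps ->
  exists del, 0 < del /\ forall y, 0 <= y -> Rabs (y - y0) < del -> Rabs (rpow y p - rpow y0 p) < eps.
Proof.
  intros Hp Hy0 eps He. destruct (Rle_lt_or_eq_dec 0 y0 Hy0) as [Hpos|H0].
  - assert (Hc : continuity_pt (fun y => Rpower y p) y0).
    { apply derivable_continuous_pt. exists (p * Rpower y0 (p - 1)). apply derivable_pt_lim_power; auto. }
    destruct (cont_eps _ _ Hc eps He) as [d [Hd K]].
    exists (Rmin d y0). split. apply Rmin_pos; auto.
    intros y Hy Hyy. pose proof (Rmin_l d y0); pose proof (Rmin_r d y0).
    assert (0 < y). { pose proof (Rabs_triang_inv y0 y). rewrite Rabs_minus_sym in Hyy. rewrite (Rabs_right y0) in H1 by lra.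
      destruct (Rle_dec y 0); [|lra]. rewrite Rabs_left1 in H1 by lra. lra. }
    rewrite !rpow_pos by auto. apply K. lra.
  - subst y0. exists (Rmin eps 1). split. apply Rmin_pos; lra.
    intros y Hy Hyy. pose proof (Rmin_l eps 1); pose proof (Rmin_r eps 1).
    unfold rpow at 2. destruct (Rlt_dec 0 0); [lra|]. rewrite Rminus_0_r in *.
    rewrite Rabs_right in Hyy by lra. rewrite Rabs_right by apply Rle_ge, rpow_ge0.
    destruct (Rle_lt_or_eq_dec 0 y Hy) as [Hyp|Hyz].
    + rewrite rpow_pos by auto. unfold Rpower.
      assert (ln y < 0). { rewrite <- ln_1. apply ln_increasing; lra. }
      apply Rle_lt_trans with (exp (ln y)).
      { destruct (Req_dec (p * ln y) (ln y)) as [E|E]. rewrite E; lra. left; apply exp_increasing. nra. }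
      rewrite exp_ln; lra.
    + subst y. unfold rpow. destruct (Rlt_dec 0 0); lra.
Qed.

Lemma Tb_small B lam : 0 <= B -> 0 <= lam < 1 -> forall eps, 0 < eps ->
  exists N0, forall N, (N0 <= N)%nat -> B * lam ^ (S N) / (1 - lam) < eps.
Proof.
  intros HB Hl eps He.
  destruct (pow_lt_1_zero lam ltac:(rewrite Rabs_right; lra) (eps * (1 - lam) / (B + 1))) as [N0 HN0].
  { apply Rdiv_lt_0_compat; [apply Rmult_lt_0_compat|]; lra. }
  exists N0. intros N HN. specialize (HN0 (S N) ltac:(lia)).
  rewrite Rabs_right in HN0 by (apply Rle_ge, pow_le; lra).
  apply Rmult_lt_reg_r with (1 - lam). lra.
  unfold Rdiv. rewrite Rmult_assoc, Rinv_l, Rmult_1_r by lra.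
  apply Rmult_lt_compat_r with (r := B + 1) in HN0; [|lra].
  unfold Rdiv in HN0. rewrite Rmult_assoc, Rinv_l, Rmult_1_r in HN0 by lra.
  pose proof (pow_le lam (S N) ltac:(lra)).
  assert (0 < eps * (1 - lam)) by (apply Rmult_lt_0_compat; lra).
  nra.
Qed.

Definition circ I r t := qscale r (expI I t).
Definition gfun a I r p t := rpow (qnorm (feval a (circ I r t))) p.

Section Core.
Variable a : nat -> quat.
Hypothesis Hreg : slice_regular_ball a.
Variable I : quat.
Hypothesis HI : in_S I.
Variable r : R.
Hypothesis Hr : 0 < r < 1.

Lemma circ_norm t : qnorm (circ I r t) = r.
Proof. unfold circ. rewrite qnorm_scale, expI_norm by auto. rewrite Rabs_right; lra. Qed.

Lemma setup : exists B lam, 0 <= B /\ 0 <= lam < 1 /\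
  forall t k, qnorm (term a (circ I r t) k) <= B * lam ^ k.
Proof.
  destruct (coef_bound a Hreg ((1 + r) / 2) ltac:(lra)) as [B [HB HBk]].
  exists B, (r / ((1 + r) / 2)). split; auto. split.
  - split. left; apply Rdiv_lt_0_compat; lra. apply Rmult_lt_reg_r with ((1 + r) / 2). lra.
    unfold Rdiv at 1. rewrite Rmult_assoc, Rinv_l by lra. lra.
  - intros t k. apply term_bound; auto. rewrite circ_norm; lra. lra.
Qed.

Lemma F_cont B lam : 0 <= B -> 0 <= lam < 1 ->
  (forall t k, qnorm (term a (circ I r t) k) <= B * lam ^ k) ->
  forall x eps, 0 < eps -> exists del, 0 < del /\ forall y, Rabs (y - x) < del ->
    qnorm (qsub (feval a (circ I r y)) (feval a (circ I r x))) < eps.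
Proof.
  intros HB Hl Ht x eps He.
  destruct (Tb_small B lam HB Hl (eps / 3) ltac:(lra)) as [N HN].
  specialize (HN N (le_n _)).
  assert (Hc : qcont (fun t => qpsum a (circ I r t) N) x) by (apply qcont_qpsum, qcont_circle).
  destruct (qcont_eps _ _ Hc (eps/3) ltac:(lra)) as [d [Hd K]].
  exists d; split; auto. intros y Hy.
  assert (Hq : forall t, qnorm (circ I r t) < 1) by (intros; rewrite circ_norm; lra).
  pose proof (feval_tail a Hreg (circ I r y) B lam (Hq y) HB Hl (Ht y) N) as T1.
  pose proof (feval_tail a Hreg (circ I r x) B lam (Hq x) HB Hl (Ht x) N) as T2.
  rewrite qnorm_sub_sym in T2.
  eapply Rle_lt_trans; [apply (qnorm_sub_triangle _ (qpsum a (circ I r y) N))|].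
  eapply Rle_lt_trans; [apply Rplus_le_compat_l, (qnorm_sub_triangle _ (qpsum a (circ I r x) N))|].
  specialize (K y Hy). lra.
Qed.

Variable p : R.
Hypothesis Hp : 1 <= p.

Lemma g_cont x : continuity_pt (gfun a I r p) x.
Proof.
  destruct setup as [B [lam [HB [Hl Ht]]]].
  apply eps_cont. intros eps He.
  destruct (rpow_cont p (qnorm (feval a (circ I r x))) Hp (qnorm_ge0 _) eps He) as [d1 [Hd1 K1]].
  destruct (F_cont B lam HB Hl Ht x d1 Hd1) as [d [Hd K]].
  exists d; split; auto. intros y Hy. unfold gfun. apply K1. apply qnorm_ge0.
  specialize (K y Hy).
  pose proof (qnorm_rev_triangle (feval a (circ I r y)) (feval a (circ I r x))).
  pose proof (qnorm_rev_triangle (feval a (circ I r x)) (feval a (circ I r y))).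
  rewrite qnorm_sub_sym in H0. apply Rabs_def1; lra.
Qed.

Lemma g_int : Riemann_integrable (gfun a I r p) (- PI) PI.
Proof. apply continuity_implies_RiemannInt. pose proof PI_RGT_0; lra. intros; apply g_cont. Qed.

End Core.

From Coquelicot Require Import Coquelicot.

Definition hterm (al be : nat -> R) (n : nat) (r : R) (k : nat) (t : R) :=
  r ^ k * (cos ((INR k - INR n) * t) * al k + sin ((INR k - INR n) * t) * be k).

Fixpoint hsum al be n r N t :=
  match N with
  | O => hterm al be n r 0 t
  | S M => hsum al be n r M t + hterm al be n r (S M) t
  end.

Definition hval (al : nat -> R) (n : nat) (r : R) (k : nat) :=
  if Nat.eqb k n then 2 * PI * (r ^ k * al k) else 0.

Fixpoint vsum al n r N :=
  match N with
  | O => hval al n r 0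
  | S M => vsum al n r M + hval al n r (S M)
  end.

Lemma sin_int_pi k n : sin ((INR k - INR n) * PI) = 0.
Proof.
  apply sin_eq_0_1. exists (Z.of_nat k - Z.of_nat n)%Z.
  rewrite minus_IZR, <- !INR_IZR_INZ. reflexivity.
Qed.

Lemma hterm_int al be n r k :
  is_RInt (hterm al be n r k) (- PI) PI (hval al n r k).
Proof.
  unfold hval. destruct (Nat.eqb_spec k n) as [E|E].
  - subst k. apply (is_RInt_ext (fun _ => r ^ n * al n)).
    { intros x _. unfold hterm. rewrite Rminus_diag, Rmult_0_l, cos_0, sin_0, Rmult_1_l, Rmult_0_l, Rplus_0_r. reflexivity. }
    replace (2 * PI * (r ^ n * al n)) with (scal (PI - - PI) (r ^ n * al n)).
    apply (is_RInt_const (V:=R_NormedModule)). unfold scal; simpl. unfold mult; simpl. ring.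
  - set (m := INR k - INR n).
    assert (Hm : m <> 0). { unfold m. intro H. apply E. apply INR_eq. lra. }
    replace 0 with (minus ((fun t => r ^ k * (al k * sin (m * t) / m - be k * cos (m * t) / m)) PI)
                          ((fun t => r ^ k * (al k * sin (m * t) / m - be k * cos (m * t) / m)) (- PI))).
    + apply (is_RInt_derive (V:=R_CompleteNormedModule) (fun t => r ^ k * (al k * sin (m * t) / m - be k * cos (m * t) / m))).
      * intros x _. unfold hterm. fold m. auto_derive. auto. field. auto.
      * intros x _. unfold hterm. fold m.
        apply (ex_derive_continuous (K:=R_AbsRing) (V:=R_NormedModule)). auto_derive. auto.
    + unfold minus, plus, opp; simpl.
      replace (m * - PI) with (- (m * PI)) by ring. rewrite sin_neg, cos_neg.
      unfold m. rewrite sin_int_pi. field. auto.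
Qed.

Lemma hsum_int al be n r N :
  is_RInt (hsum al be n r N) (- PI) PI (vsum al n r N).
Proof.
  induction N; simpl.
  - apply hterm_int.
  - apply (is_RInt_plus (hsum al be n r N) (hterm al be n r (S N))); auto. apply hterm_int.
Qed.

Lemma vsum_val al n r N : (n <= N)%nat -> vsum al n r N = 2 * PI * (r ^ n * al n).
Proof.
  assert (H : forall N, vsum al n r N = if Nat.leb n N then 2 * PI * (r ^ n * al n) else 0).
  { induction N0; simpl.
    - unfold hval. destruct n; simpl; auto.
    - rewrite IHN0. unfold hval. destruct (Nat.leb_spec n N0); destruct (Nat.eqb_spec (S N0) n);
        destruct (Nat.leb_spec n (S N0)); try lia; try subst; ring. }
  intros HN. rewrite H. destruct (Nat.leb_spec n N); auto; lia.
Qed.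

Lemma qdot_scale_r x s y : qdot x (qscale s y) = s * qdot x y.
Proof. qd; ring. Qed.

Lemma hsum_identity a I (HI : in_S I) v n r N t :
  hsum (fun k => qdot (a k) v) (fun k => qdot (qmul I (a k)) v) n r N t =
  qdot (qmul (expI I (- INR n * t)) (qpsum a (circ I r t) N)) v.
Proof.
  assert (Hterm : forall k, qdot (qmul (expI I (- INR n * t)) (term a (circ I r t) k)) v =
     hterm (fun k => qdot (a k) v) (fun k => qdot (qmul I (a k)) v) n r k t).
  { intros k. unfold term, circ. rewrite qpow_circle by auto.
    replace (qmul (expI I (- INR n * t)) (qmul (qscale (r ^ k) (expI I (INR k * t))) (a k)))
      with (qscale (r ^ k) (qmul (qmul (expI I (- INR n * t)) (expI I (INR k * t))) (a k)))
      by (apply quat_eq; qd; ring).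
    rewrite expI_mul by auto. rewrite qdot_scale_l, qdot_expI_mul by auto.
    unfold hterm. replace (- INR n * t + INR k * t) with ((INR k - INR n) * t) by ring. reflexivity. }
  induction N.
  - simpl hsum. rewrite <- Hterm. reflexivity.
  - simpl hsum. rewrite IHN, qpsum_S, qmul_add_r, qdot_add_l, Hterm. reflexivity.
Qed.

Lemma RInt_defs f lo hi (pr : Riemann_integrable f lo hi) : Defs.RInt f lo hi = RiemannInt pr.
Proof.
  unfold Defs.RInt.
  assert (H : exists v, exists pr : Riemann_integrable f lo hi, RiemannInt pr = v) by (exists (RiemannInt pr); exists pr; auto).
  destruct (epsilon_spec (inhabits 0) _ H) as [pr' E]. rewrite <- E. apply RiemannInt_P5.
Qed.

Lemma core a (Hreg : slice_regular_ball a) n I (HI : in_S I) r (Hr : 0 < r < 1) p (Hp : 1 <= p) :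
  0 < qnorm (a n) ->
  2 * PI * Rpower (qnorm (a n) * r ^ n) p <= RiemannInt (g_int a Hreg I HI r Hr p Hp).
Proof.
  intros Hc. set (c := qnorm (a n)) in *.
  set (v := qscale (/ c) (a n)).
  assert (Hv : qnorm v = 1).
  { unfold v. rewrite qnorm_scale, Rabs_right. fold c. field. lra. left; apply Rinv_0_lt_compat; auto. }
  set (al := fun k => qdot (a k) v).
  set (be := fun k => qdot (qmul I (a k)) v).
  assert (Hal : al n = c).
  { unfold al, v. rewrite qdot_scale_r, <- qnorm_sq. fold c. field. lra. }
  set (d := c * r ^ n).
  assert (Hd : 0 < d) by (unfold d; apply Rmult_lt_0_compat; auto; apply pow_lt; lra).
  set (D := Rpower d p). set (K := p * Rpower d (p - 1)).
  assert (HK : 0 <= K) by (unfold K; apply Rmult_le_pos; [lra | left; unfold Rpower; apply exp_pos]).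
  destruct (setup a Hreg I HI r Hr) as [B [lam [HB [Hl Ht]]]].
  set (RI := RiemannInt (g_int a Hreg I HI r Hr p Hp)).
  assert (Hg : is_RInt (gfun a I r p) (- PI) PI RI).
  { unfold RI. rewrite <- RInt_Reals. apply (RInt_correct (V:=R_CompleteNormedModule)).
    apply ex_RInt_Reals_1. apply g_int; auto. }
  assert (Main : forall N, (n <= N)%nat -> 2 * PI * D - 2 * PI * K * (B * lam ^ S N / (1 - lam)) <= RI).
  { intros N HN. set (Tb := B * lam ^ S N / (1 - lam)).
    set (ell := fun t => D + K * (hsum al be n r N t - (Tb + d))).
    assert (Hell : is_RInt ell (- PI) PI (2 * PI * D - 2 * PI * K * Tb)).
    { assert (H1 := hsum_int al be n r N).
      assert (H2 := is_RInt_const (V:=R_NormedModule) (- PI) PI (Tb + d)).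
      assert (H3 := is_RInt_minus (V:=R_NormedModule) _ _ _ _ _ _ H1 H2).
      assert (H4 := is_RInt_scal (V:=R_NormedModule) _ _ _ K _ H3).
      assert (H5 := is_RInt_const (V:=R_NormedModule) (- PI) PI D).
      assert (H6 := is_RInt_plus (V:=R_NormedModule) _ _ _ _ _ _ H5 H4).
      rewrite vsum_val in H6 by auto. rewrite Hal in H6. fold d in H6.
      replace (2 * PI * D - 2 * PI * K * Tb) with
        (plus (scal (PI - - PI) D) (scal K (minus (2 * PI * (r ^ n * c)) (scal (PI - - PI) (Tb + d))))).
      exact H6.
      unfold plus, scal, minus, opp, mult; simpl. unfold mult, plus, opp; simpl. unfold d. ring. }
    apply (is_RInt_le ell (gfun a I r p) (- PI) PI); auto.
    { pose proof PI_RGT_0; lra. }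
    intros t _. unfold ell, gfun.
    set (F := feval a (circ I r t)). set (S := qpsum a (circ I r t) N).
    assert (Htail : qnorm (qsub F S) <= Tb).
    { apply (feval_tail a Hreg (circ I r t) B lam ltac:(rewrite (circ_norm I HI r Hr); lra) HB Hl (Ht t)). }
    assert (Hh : hsum al be n r N t <= qnorm S).
    { unfold al, be. rewrite hsum_identity by auto.
      eapply Rle_trans; [apply cauchy_schwarz|]. rewrite Hv, qnorm_mul, expI_norm by auto. fold S. lra. }
    pose proof (qnorm_rev_triangle S F). rewrite qnorm_sub_sym in H.
    pose proof (tangent_ineq (qnorm F) d p (qnorm_ge0 F) Hd Hp). fold D in H0. fold K in H0.
    assert (K * (hsum al be n r N t - (Tb + d)) <= K * (qnorm F - d)) by (apply Rmult_le_compat_l; lra).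
    lra. }
  assert (0 <= 2 * PI * K) by (apply Rmult_le_pos; [pose proof PI_RGT_0; lra | auto]).
  apply le_eps. intros eps He.
  destruct (Tb_small B lam HB Hl (eps / (2 * PI * K + 1))) as [N0 HN0].
  { apply Rdiv_lt_0_compat; auto. lra. }
  specialize (HN0 (N0 + n)%nat ltac:(lia)). specialize (Main (N0 + n)%nat ltac:(lia)).
  set (T := B * lam ^ S (N0 + n) / (1 - lam)) in *.
  assert (2 * PI * K * T <= eps).
  { apply Rmult_lt_compat_r with (r := 2 * PI * K + 1) in HN0; [|lra].
    replace (eps / (2 * PI * K + 1) * (2 * PI * K + 1)) with eps in HN0 by (field; lra).
    assert (0 <= T) by (unfold T; unfold Rdiv; apply Rmult_le_pos; [apply Rmult_le_pos; [auto| apply pow_le; lra] | left; apply Rinv_0_lt_compat; lra]).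
    nra. }
  lra.
Qed.

Lemma hm_lower a (Hreg : slice_regular_ball a) n I (HI : in_S I) p (Hp : 1 <= p) r (Hr : 0 < r < 1) :
  qnorm (a n) * r ^ n <= hardy_mean p a I r.
Proof.
  destruct (Rle_lt_or_eq_dec 0 (qnorm (a n)) (qnorm_ge0 _)) as [Hc|Hc].
  2:{ rewrite <- Hc, Rmult_0_l. unfold hardy_mean. apply rpow_ge0. }
  pose proof (core a Hreg n I HI r Hr p Hp Hc) as H.
  unfold hardy_mean.
  change (fun th => rpow (qnorm (feval a (qscale r (expI I th)))) p) with (gfun a I r p).
  rewrite (RInt_defs _ _ _ (g_int a Hreg I HI r Hr p Hp)).
  set (RI := RiemannInt (g_int a Hreg I HI r Hr p Hp)) in *.
  set (d := qnorm (a n) * r ^ n) in *.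
  assert (Hd : 0 < d) by (unfold d; apply Rmult_lt_0_compat; auto; apply pow_lt; lra).
  pose proof PI_RGT_0.
  assert (HX : Rpower d p <= / (2 * PI) * RI).
  { apply Rmult_le_reg_l with (2 * PI). lra. rewrite <- Rmult_assoc, Rinv_r, Rmult_1_l by lra. auto. }
  assert (Hpos : 0 < Rpower d p) by (unfold Rpower; apply exp_pos).
  rewrite rpow_pos by lra.
  apply Rle_trans with (Rpower (Rpower d p) (1 / p)).
  - rewrite Rpower_mult. replace (p * (1 / p)) with 1 by (field; lra). rewrite Rpower_1; lra.
  - apply Rle_Rpower_l. left; apply Rdiv_lt_0_compat; lra. split; auto.
Qed.

Lemma pow_bernoulli t n : 0 <= t <= 1 -> 1 - INR n * t <= (1 - t) ^ n.
Proof.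
  intros Ht. induction n.
  - simpl; lra.
  - rewrite S_INR. simpl pow.
    destruct (Rle_dec 0 (1 - INR n * t)).
    + assert ((1 - t) * (1 - INR n * t) <= (1 - t) * (1 - t) ^ n) by (apply Rmult_le_compat_l; lra).
      pose proof (pos_INR n). nra.
    + assert (0 <= (1 - t) ^ n) by (apply pow_le; lra). nra.
Qed.

Lemma pow_near_one c n y del : 0 <= c -> 0 < del ->
  (forall r, 0 < r < 1 -> 1 - del < r -> c * r ^ n <= y) -> c <= y.
Proof.
  intros Hc Hd H. apply le_eps. intros eps He.
  set (t := Rmin (Rmin (del / 2) (1 / 2)) (eps / (c * INR n + 1))).
  pose proof (pos_INR n).
  assert (Ht0 : 0 < t). { unfold t. repeat apply Rmin_pos; try lra. apply Rdiv_lt_0_compat; nra. }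
  assert (Ht1 : t <= del / 2) by (unfold t; eapply Rle_trans; apply Rmin_l).
  assert (Ht2 : t <= 1 / 2) by (unfold t; eapply Rle_trans; [apply Rmin_l|apply Rmin_r]).
  assert (Ht3 : t <= eps / (c * INR n + 1)) by (unfold t; apply Rmin_r).
  specialize (H (1 - t) ltac:(lra) ltac:(lra)).
  pose proof (pow_bernoulli t n ltac:(lra)).
  assert (c * (1 - INR n * t) <= c * (1 - t) ^ n) by (apply Rmult_le_compat_l; auto).
  assert (c * INR n * t <= eps).
  { apply Rmult_le_compat_l with (r := c * INR n + 1) in Ht3; [|nra].
    replace ((c * INR n + 1) * (eps / (c * INR n + 1))) with eps in Ht3 by (field; nra).
    nra. }
  nra.
Qed.

Lemma hardy_lim_lower a (Hreg : slice_regular_ball a) n I (HI : in_S I) p (Hp : 1 <= p) L :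
  hardy_slice_limit p a I L -> qnorm (a n) <= L.
Proof.
  intros H. apply le_eps. intros eps He.
  destruct (H eps He) as [del [Hd K]].
  apply (pow_near_one _ n _ del (qnorm_ge0 _) Hd).
  intros r Hr Hrd.
  pose proof (hm_lower a Hreg n I HI p Hp r Hr).
  assert (R_dist (hardy_mean p a I r) L < eps).
  { apply K. split. lra. simpl. unfold R_dist. rewrite Rabs_left by lra. lra. }
  unfold R_dist in H1. apply Rabs_def2 in H1. lra.
Qed.

Definition I0 := Q 0 1 0 0.
Lemma I0_S : in_S I0.
Proof. unfold in_S, I0; apply quat_eq; unfold qmul, qreal; cbn [qr qi qj qk]; ring. Qed.

Lemma hinf_lower a (Hreg : slice_regular_ball a) n N : hinf_norm a N -> qnorm (a n) <= N.
Proof.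
  intros [Hub _].
  assert (HN0 : 0 <= N).
  { eapply Rle_trans; [apply (qnorm_ge0 (feval a qzero))|]. apply Hub. exists qzero. split; auto.
    rewrite qnorm_zero; lra. }
  destruct (Rle_lt_or_eq_dec 0 (qnorm (a n)) (qnorm_ge0 _)) as [Hc|Hc].
  2:{ rewrite <- Hc; auto. }
  apply (pow_near_one _ n _ 1 (qnorm_ge0 _) ltac:(lra)).
  intros r Hr _.
  assert (Hp1 : 1 <= 1) by lra.
  pose proof (core a Hreg n I0 I0_S r Hr 1 Hp1 Hc) as H.
  rewrite Rpower_1 in H by (apply Rmult_lt_0_compat; auto; apply pow_lt; lra).
  set (RI := RiemannInt (g_int a Hreg I0 I0_S r Hr 1 Hp1)) in *.
  assert (Hg : is_RInt (gfun a I0 r 1) (- PI) PI RI).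
  { unfold RI. rewrite <- RInt_Reals. apply (RInt_correct (V:=R_CompleteNormedModule)).
    apply ex_RInt_Reals_1. exact (g_int a Hreg I0 I0_S r Hr 1 Hp1). }
  assert (HRI : RI <= scal (PI - - PI) N).
  { apply (is_RInt_le (gfun a I0 r 1) (fun _ => N) (- PI) PI).
    { pose proof PI_RGT_0; lra. }
    { exact Hg. }
    { apply (is_RInt_const (V:=R_NormedModule)). }
    intros t _. unfold gfun.
    assert (qnorm (feval a (circ I0 r t)) <= N).
    { apply Hub. exists (circ I0 r t). split; auto. rewrite (circ_norm I0 I0_S r Hr). lra. }
    unfold rpow. destruct (Rlt_dec 0 (qnorm (feval a (circ I0 r t)))).
    rewrite Rpower_1; auto. lra. }
  unfold scal in HRI; simpl in HRI; unfold mult in HRI; simpl in HRI.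
  pose proof PI_RGT_0. nra.
Qed.

Lemma const_ge1 p n : 1 <= p -> 1 <= sqrt 2 * exp (1 / p) * Rpower (1 + INR n * p / 2) (1 / p).
Proof.
  intros Hp.
  assert (H1 : 1 <= sqrt 2) by (rewrite <- sqrt_1; apply sqrt_le_1_alt; lra).
  assert (H2 : 1 <= exp (1 / p)).
  { pose proof (exp_ineq1_le (1 / p)). assert (0 < 1 / p) by (apply Rdiv_lt_0_compat; lra). lra. }
  assert (H3 : 1 <= Rpower (1 + INR n * p / 2) (1 / p)).
  { unfold Rpower. pose proof (pos_INR n).
    assert (0 <= ln (1 + INR n * p / 2)).
    { rewrite <- ln_1. apply ln_le. lra. nra. }
    assert (0 <= 1 / p * ln (1 + INR n * p / 2)).
    { apply Rmult_le_pos; auto. left; apply Rdiv_lt_0_compat; lra. }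
    pose proof (exp_ineq1_le (1 / p * ln (1 + INR n * p / 2))). lra. }
  assert (1 <= sqrt 2 * exp (1 / p)) by nra.
  nra.
Qed.

Theorem lemma8p3 (a : nat -> quat) (Hreg : slice_regular_ball a) (n : nat) :
  (forall (p N : R), 1 <= p -> hardy_norm p a N ->
     qnorm (slice_deriv0 a n) <=
       sqrt 2 * INR (fact n) * exp (1 / p) *
       Rpower (1 + INR n * p / 2) (1 / p) * N) /\
  (forall N : R, hinf_norm a N ->
     qnorm (slice_deriv0 a n) <= INR (fact n) * N).
Proof.
  assert (Hd : qnorm (slice_deriv0 a n) = INR (fact n) * qnorm (a n)).
  { unfold slice_deriv0. rewrite qnorm_scale, Rabs_right; auto. apply Rle_ge, pos_INR. }
  pose proof (pos_INR (fact n)) as Hf.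
  split.
  - intros p N Hp [Hlim Hlub].
    destruct (Hlim I0 I0_S) as [L HL].
    assert (HLN : L <= N) by (apply (proj1 Hlub); exists I0; split; auto; apply I0_S).
    pose proof (hardy_lim_lower a Hreg n I0 I0_S p Hp L HL).
    pose proof (const_ge1 p n Hp).
    pose proof (qnorm_ge0 (a n)).
    rewrite Hd.
    replace (sqrt 2 * INR (fact n) * exp (1 / p) * Rpower (1 + INR n * p / 2) (1 / p) * N)
      with (INR (fact n) * ((sqrt 2 * exp (1 / p) * Rpower (1 + INR n * p / 2) (1 / p)) * N)) by ring.
    apply Rmult_le_compat_l; auto. nra.
  - intros N HN. rewrite Hd. apply Rmult_le_compat_l; auto. apply hinf_lower; auto.
Qed.
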